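(* Consider a wormhole with two 1D boundaries, with three atomic regions $A,B,C$ on the left boundary and $A',B',C'$ on the right boundary. Let an input vector $v\in\mathbb{R}_{\ge 0}^{63}$ specify a value $S(R)$ for every nonempty subset $R\subseteq\{A,B,C,A',B',C'\}$. Let $V\subseteq\mathbb{R}_{\ge0}^{63}$ be the set of input vectors for which there exists a planar graph model. Then $V$ is not closed under convex combinations.
   Context: The boundary consists of two circles, the left one divided into the arcs $A,B,C$ in this cyclic order and the right one into $A',B',C'$. A graph model for $v$ is a finite undirected graph with nonnegative real edge weights containing six distinguished boundary vertices $v_A,\ldots,v_{C'}$ such that for every nonempty $R$, the min-cut value between the boundary vertices of the regions in $R$ and the remaining boundary vertices equals $S(R)$ (the min-cut value between two disjoint vertex sets is the minimum total weight of an edge set whose removal disconnects every vertex of the first from every vertex of the second). It is planar if it can be drawn without edge crossings on a closed annulus with $v_A,v_B,v_C$ on one boundary circle in this cyclic order and $v_{A'},v_{B'},v_{C'}$ on the other in this cyclic order. *)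

(* Defs.v *)
From HB Require Import structures.
From mathcomp Require Import all_boot all_order fingroup perm all_algebra.
From mathcomp Require Import reals.
Set Implicit Arguments.
Unset Strict Implicit.
Unset Printing Implicit Defensive.
Import Order.TTheory GRing.Theory Num.Theory.

(* Finite undirected multigraphs: vertex finType V, edge finType E,    *)
Section Graphs.
Variables (V E : finType) (src dst : E -> V).

Definition adj_without (F : {set E}) : rel V := fun x y =>
  [exists e, (e \notin F) &&
     (((src e == x) && (dst e == y)) || ((src e == y) && (dst e == x)))].

Definition separates (F : {set E}) (X Y : {set V}) : Prop :=
  forall x y, x \in X -> y \in Y -> ~~ connect (adj_without F) x y.

Definition is_mincut (R : realType) (w : E -> R) (X Y : {set V}) (c : R) : Prop :=
  (exists F : {set E}, separates F X Y /\ (\sum_(e in F) w e)%R = c) /\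
  (forall F : {set E}, separates F X Y -> (c <= \sum_(e in F) w e)%R).

(* darts: (e, true) leaves src e, (e, false) leaves dst e *)
Definition dart := (E * bool)%type.
Definition tail (d : dart) : V := if d.2 then src d.1 else dst d.1.
Definition flip (d : dart) : dart := (d.1, ~~ d.2).

(* s is a rotation system: it permutes the darts at each vertex in a
   single cycle (the cyclic order of darts around the vertex) *)
Definition is_rotation (s : {perm dart}) : Prop :=
  (forall d, tail (s d) = tail d) /\
  (forall d1 d2, tail d1 = tail d2 -> fconnect s d1 d2).

Definition nfaces (s : {perm dart}) : nat :=
  #|[set [set d' | fconnect (fun d => s (flip d)) d d'] | d : dart]|.
Definition nisolated : nat := #|[set v : V | [forall d : dart, tail d != v]]|.
Definition ncomp : nat := #|[set [set y | connect (adj_without set0) x y] | x : V]|.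

(* the embedding given by s is spherical (every component has genus 0):
   Euler's formula V - E + F = 2 * (#components), isolated vertices
   contributing one face each *)
Definition genus0 (s : {perm dart}) : Prop :=
  (#|V| + (nfaces s + nisolated) = #|E| + 2 * ncomp)%N.
End Graphs.

(* Boundary regions: 'I_6 with 0,1,2 = A,B,C (left circle) and         *)
(* 3,4,5 = A',B',C' (right circle).                                    *)
Definition bidx (side : bool) (i : 'I_3) : 'I_6 :=
  if side then rshift 3 i else lshift 3 i.
Definition succ3 (i : 'I_3) : 'I_3 := ordS i.

(* Annulus planarity: glue a disk to each boundary circle, i.e. add a hub
   vertex per circle joined to its three boundary vertices (spokes) and
   the rim triangle v_0 v_1 v_2; the augmented graph must be embedded in
   the sphere with the rotation around each hub being (v_0, v_1, v_2). *)
Section Annulus.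
Variables (V E : finType) (src dst : E -> V) (bnd : 'I_6 -> V).

Definition augV := (V + bool)%type.              (* inr side = hub *)
Definition augE := (E + (bool * 'I_3 * bool))%type. (* (side, i, is_rim) *)

Definition aug_src (e : augE) : augV :=
  match e with
  | inl e => inl (src e)
  | inr (s, i, rim) => if rim then inl (bnd (bidx s i)) else inr s
  end.
Definition aug_dst (e : augE) : augV :=
  match e with
  | inl e => inl (dst e)
  | inr (s, i, rim) => if rim then inl (bnd (bidx s (succ3 i)))
                       else inl (bnd (bidx s i))
  end.

Definition spoke_dart (s : bool) (i : 'I_3) : dart augE := (inr (s, i, false), true).

Definition planar_annulus : Prop :=
  exists rot : {perm dart augE},
    is_rotation aug_src aug_dst rot /\ genus0 aug_src aug_dst rot /\
    (forall s i, rot (spoke_dart s i) = spoke_dart s (succ3 i)).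
End Annulus.

Definition region_set := {Rg : {set 'I_6} | Rg != set0}.

Definition graph_model (R : realType) (v : region_set -> R)
    (V E : finType) (src dst : E -> V) (w : E -> R) (bnd : 'I_6 -> V) : Prop :=
  (forall e, (0 <= w e)%R) /\ injective bnd /\
  forall Rg : region_set,
    is_mincut src dst w (bnd @: val Rg) (bnd @: ~: val Rg) (v Rg).

Definition in_planar_set (R : realType) (v : region_set -> R) : Prop :=
  (forall Rg, (0 <= v Rg)%R) /\
  exists (V E : finType) (src dst : E -> V) (w : E -> R) (bnd : 'I_6 -> V),
    graph_model v src dst w bnd /\ planar_annulus src dst bnd.

(* Main.v *)
Require Import Defs.
From HB Require Import structures.
From mathcomp Require Import all_boot all_order fingroup perm all_algebra.
From mathcomp Require Import reals.
From mathcomp Require Import ring zify lra.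
Import Order.TTheory GRing.Theory Num.Theory.
Set Implicit Arguments. Unset Strict Implicit. Unset Printing Implicit Defensive.
Local Open Scope ring_scope.

Lemma two0 : (2%:R : 'F_2) = 0. Proof. by apply/eqP. Qed.
Lemma addxx (x : 'F_2) : x + x = 0. Proof. by rewrite -mulr2n -mulr_natr two0 mulr0. Qed.
Lemma one0 : (1 : 'F_2) != 0. Proof. by []. Qed.
Lemma addxx_eq (x y : 'F_2) : x + y = 0 -> x = y.
Proof. by move=> h; rewrite -[y]add0r -h -addrA addxx addr0. Qed.

Lemma sum_eq1 (T : finType) (u : T -> 'F_2) z : \sum_x u x * (x == z)%:R = u z.
Proof.
rewrite (bigD1 z) //= eqxx mulr1 big1 ?addr0 // => x /negbTE ->; by rewrite mulr0.
Qed.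

Lemma sum_ordT (T : finType) (h : T -> 'F_2) :
  \sum_(i < #|T|) h (enum_val i) = \sum_x h x.
Proof. by rewrite -(big_enum_val h). Qed.

Lemma flipK (E : finType) : involutive (@flip E).
Proof. by case=> e b; rewrite /flip /= negbK. Qed.

Section MapTheory.
Variables (V E : finType) (src dst : E -> V) (s : {perm dart E}).
Hypothesis rotS : is_rotation src dst s.
Local Notation tl := (tail src dst).

Definition phi (d : dart E) := s (flip d).
Lemma phi_inj : injective phi.
Proof. by move=> x y /perm_inj /(can_inj (@flipK E)). Qed.

Definition face d := [set d' | fconnect (fun d => s (flip d)) d d'].
Definition FS := [set face d | d : dart E].
Lemma nfacesE : nfaces s = #|FS|. Proof. by []. Qed.

Lemma fFS d : face d \in FS. Proof. by apply/imsetP; exists d. Qed.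

Lemma face_phi f d : f \in FS -> (phi d \in f) = (d \in f).
Proof.
case/imsetP => d0 _ ->; rewrite !inE.
by rewrite -(same_fconnect1_r phi_inj).
Qed.

Lemma face_flip f d : f \in FS -> (flip d \in f) = (s d \in f).
Proof. by move=> fF; rewrite -(face_phi _ fF) /phi flipK. Qed.

Lemma face_unique f d : f \in FS -> d \in f -> f = face d.
Proof.
case/imsetP => d0 _ ->; rewrite inE => c0; apply/setP => y; rewrite !inE.
apply/idP/idP => h.
  by rewrite (fconnect_sym phi_inj) in c0; exact: connect_trans c0 h.
exact: connect_trans c0 h.
Qed.

Definition fv (i : 'I_#|FS|) : {set dart E} := enum_val i.
Definition fidx d : 'I_#|FS| := enum_rank_in (fFS d) (face d).

Lemma fv_fidx d : fv (fidx d) = face d.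
Proof. by rewrite /fv /fidx enum_rankK_in // fFS. Qed.

Lemma in_fv d i : (d \in fv i) = (i == fidx d).
Proof.
apply/idP/eqP => [h|->]; last by rewrite fv_fidx inE connect0.
have := face_unique (enum_valP i) h; rewrite -/(fv i) => e.
apply: enum_val_inj; rewrite -/(fv i) -/(fv (fidx d)) e fv_fidx //.
Qed.

Definition pot (x : 'rV['F_2]_#|FS|) d := \sum_(i < #|FS|) x 0 i * (d \in fv i)%:R.
Lemma potE x d : pot x d = x 0 (fidx d).
Proof.
rewrite /pot (bigD1 (fidx d)) //= in_fv eqxx mulr1 big1 ?addr0 // => i ni.
by rewrite in_fv (negbTE ni) mulr0.
Qed.
Lemma pot_phi x d : pot x (phi d) = pot x d.
Proof.
by rewrite /pot; apply: eq_bigr => i _; rewrite face_phi // /fv enum_valP.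
Qed.
Lemma pot_flip x d : pot x (flip d) = pot x (s d).
Proof. by rewrite -pot_phi /phi flipK. Qed.

End MapTheory.

Section Mats.
Variables (V E : finType) (src dst : E -> V) (s : {perm dart E}).
Hypothesis rotS : is_rotation src dst s.
Local Notation tl := (tail src dst).
Local Notation FS := (FS s).
Local Notation fv := (@fv _ s).

Definition Bm : 'M['F_2]_(#|V|, #|E|) := \matrix_(i, j)
  ((tl (enum_val j, true) == enum_val i)%:R + (tl (enum_val j, false) == enum_val i)%:R).
Definition Pm : 'M['F_2]_(#|FS|, #|E|) := \matrix_(i, j)
  (((enum_val j, true) \in fv i)%:R + ((enum_val j, false) \in fv i)%:R).

Definition uv (u : 'rV['F_2]_#|V|) (x : V) := u 0 (enum_rank x).

Lemma uvE (u : 'rV['F_2]_#|V|) i : u 0 i = uv u (enum_val i).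
Proof. by rewrite /uv enum_valK. Qed.

Lemma mulBE (u : 'rV['F_2]_#|V|) j : (u *m Bm) 0 j = uv u (src (enum_val j)) + uv u (dst (enum_val j)).
Proof.
rewrite !mxE.
transitivity (\sum_(i < #|V|) (uv u (enum_val i) * (enum_val i == src (enum_val j))%:R
   + uv u (enum_val i) * (enum_val i == dst (enum_val j))%:R)).
  apply: eq_bigr => i _; rewrite !mxE uvE mulrDr /= ![_ == enum_val i]eq_sym //.
rewrite big_split /= (sum_ordT (fun x => uv u x * (x == _)%:R)).
by rewrite (sum_ordT (fun x => uv u x * (x == _)%:R)) !sum_eq1.
Qed.

Lemma mulPE (x : 'rV['F_2]_#|FS|) j : (x *m Pm) 0 j = pot x (enum_val j, true) + pot x (enum_val j, false).
Proof.
rewrite !mxE /pot -big_split /=; apply: eq_bigr => i _; by rewrite !mxE mulrDr.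
Qed.

Lemma sum_tail_s (v : V) (h : dart E -> 'F_2) :
  \sum_(d | tl d == v) h (s d) = \sum_(d | tl d == v) h d.
Proof.
rewrite [RHS](reindex_inj (@perm_inj _ s)) /=; apply: eq_bigl => d.
by rewrite rotS.1.
Qed.

Lemma PB0 : Pm *m Bm^T = 0.
Proof.
apply/matrixP => i k; rewrite !mxE.
set f := fv i; set v := enum_val k.
have fF : f \in FS by rewrite /f /fv enum_valP.
transitivity (\sum_(e : E) \sum_(b : bool)
   ((tl (e, b) == v)%:R * (((e, b) \in f)%:R + (flip (e, b) \in f)%:R)) : 'F_2).
  rewrite -(sum_ordT (fun e => \sum_(b : bool) _)); apply: eq_bigr => j _.
  rewrite !mxE big_bool /= /flip /=.
  ring.
rewrite pair_big /=.
transitivity (\sum_(d : dart E) ((tl d == v)%:R * ((d \in f)%:R + (flip d \in f)%:R)) : 'F_2).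
  by apply: eq_bigr => -[e b].
transitivity (\sum_(d | tl d == v) (((d \in f)%:R + (flip d \in f)%:R)) : 'F_2).
  rewrite [RHS]big_mkcond /=; apply: eq_bigr => d _.
  by case: (tl d == v); rewrite ?mul1r ?mul0r.
rewrite big_split /=.
under [X in _ + X = _]eq_bigr => d _ do rewrite (face_flip _ fF).
by rewrite (sum_tail_s v (fun d => (d \in f)%:R)) addxx.
Qed.
End Mats.

Lemma adj_sym (V E : finType) (src dst : E -> V) F : symmetric (adj_without src dst F).
Proof.
move=> x y; apply/existsP/existsP => -[e /andP[eF h]]; exists e; rewrite eF /=;
  by rewrite orbC.
Qed.

Section Comps.
Variables (V E : finType) (src dst : E -> V).
Local Notation adj := (adj_without src dst set0).
Definition cls x := [set y | connect adj x y].
Definition CS := [set cls x | x : V].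
Lemma ncompE : ncomp src dst = #|CS|. Proof. by []. Qed.
Lemma csym : connect_sym adj. Proof. exact/sym_connect_sym/adj_sym. Qed.
Lemma cls_eq x y : y \in cls x -> cls x = cls y.
Proof.
rewrite inE => cxy; apply/setP => z; rewrite !inE; apply/idP/idP => h.
  by rewrite csym in cxy; exact: connect_trans cxy h.
exact: connect_trans cxy h.
Qed.
Lemma clsCS x : cls x \in CS. Proof. by apply/imsetP; exists x. Qed.
Lemma cls_self x : x \in cls x. Proof. by rewrite inE connect0. Qed.

Lemma kerB_edge (u : 'rV['F_2]_#|V|) e : u *m Bm src dst = 0 -> uv u (src e) = uv u (dst e).
Proof.
move=> h; have := congr1 (fun M : 'rV['F_2]_#|E| => M 0 (enum_rank e)) h.
by rewrite mulBE enum_rankK mxE => /addxx_eq.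
Qed.

Lemma kerB_const (u : 'rV['F_2]_#|V|) x y : u *m Bm src dst = 0 ->
  connect adj x y -> uv u x = uv u y.
Proof.
move=> h /connectP[p pth ->] {y}; elim: p x pth => //= y p IH x /andP[/existsP[e /andP[_ exy]] pth].
rewrite -(IH y pth); case/orP: exy => /andP[/eqP<- /eqP<-]; rewrite (kerB_edge _ h) //.
Qed.

Definition Ind : 'M['F_2]_(#|CS|, #|V|) :=
  \matrix_(c, i) (enum_val i \in (enum_val c : {set V}))%:R.

Lemma kerB_row (h : 'rV['F_2]_#|V|) : h *m Bm src dst = 0 -> (h <= Ind)%MS.
Proof.
move=> hB.
apply/submxP.
exists (\row_c (if [pick x | (enum_val c : {set V}) == cls x] is Some x then uv h x else 0)).
apply/rowP => i; rewrite !mxE.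
set z := enum_val i.
pose c0 := enum_rank_in (clsCS z) (cls z).
have ec0 : enum_val c0 = cls z by rewrite enum_rankK_in // clsCS.
rewrite (bigD1 c0) //= big1 ?addr0.
  rewrite !mxE ec0 cls_self mulr1 uvE -/z.
  case: pickP => [x /eqP ex | none]; last by have := none z; rewrite -ec0 eqxx.
  have : z \in cls x by rewrite -ex cls_self.
  rewrite inE => cxz; apply: (kerB_const hB); by rewrite csym.
move=> c nc; rewrite !mxE.
case zin: (z \in (enum_val c : {set V})); last by rewrite mulr0.
exfalso; move/negP: nc; apply; apply/eqP/enum_val_inj; rewrite ec0.
have := enum_valP c; case/imsetP => x _ ex.
by rewrite ex (cls_eq (_ : z \in cls x)) // -ex.
Qed.

Lemma kerB_sub : (kermx (Bm src dst) <= Ind)%MS.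
Proof.
apply/row_subP => r; apply: kerB_row.
by rewrite -row_mul mulmx_ker row0.
Qed.

Lemma rank_kerB : (\rank (kermx (Bm src dst)) <= ncomp src dst)%N.
Proof. by rewrite ncompE; apply: leq_trans (mxrankS kerB_sub) (rank_leq_row _). Qed.
End Comps.

Section Step4.
Variables (V E : finType) (src dst : E -> V) (s : {perm dart E}).
Hypothesis rotS : is_rotation src dst s.
Local Notation tl := (tail src dst).
Local Notation FS := (FS s).
Local Notation fv := (@fv _ s).
Local Notation Pm := (Pm s).
Local Notation Bm := (Bm src dst).

Lemma kerP_flip (x : 'rV['F_2]_#|FS|) d : x *m Pm = 0 -> pot x (flip d) = pot x d.
Proof.
move=> h; have := congr1 (fun M : 'rV['F_2]_#|E| => M 0 (enum_rank d.1)) h.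
rewrite mulPE enum_rankK mxE => /addxx_eq.
by case: d => e [] /= ->.
Qed.

Lemma kerP_vertex (x : 'rV['F_2]_#|FS|) d d' : x *m Pm = 0 -> tl d = tl d' ->
  pot x d = pot x d'.
Proof.
move=> h /(rotS.2) /connectP[p pth ->] {d'}.
elim: p d pth => //= y p IH d /andP[/eqP <- pth].
by rewrite -(IH _ pth) -(pot_flip x d) (kerP_flip _ h).
Qed.

Definition Qm : 'M['F_2]_(#|FS|, #|V|) := \matrix_(f, i)
  (if [pick d | tl d == enum_val i] is Some d then (d \in fv f)%:R else 0).

Definition qv (x : 'rV['F_2]_#|FS|) v :=
  if [pick d | tl d == v] is Some d then pot x d else 0.

Lemma mulQE x i : (x *m Qm) 0 i = qv x (enum_val i).
Proof.
rewrite !mxE /qv /pot; under eq_bigr => f _ do rewrite /Qm mxE.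
case: pickP => [d _|_] //.
by rewrite big1 // => f _; rewrite mulr0.
Qed.

Lemma qv_tail x d : x *m Pm = 0 -> qv x (tl d) = pot x d.
Proof.
move=> h; rewrite /qv; case: pickP => [d' /eqP e|none]; last by have := none d; rewrite eqxx.
exact: kerP_vertex.
Qed.

Lemma kerPQB (x : 'rV['F_2]_#|FS|) : x *m Pm = 0 -> (x *m Qm) *m Bm = 0.
Proof.
move=> h; apply/rowP => j; rewrite mulBE /uv !mulQE !enum_rankK.
rewrite -[src _]/(tl (enum_val j, true)) -[dst _]/(tl (enum_val j, false)) !qv_tail //.
have := congr1 (fun M : 'rV['F_2]_#|E| => M 0 j) h.
by rewrite mulPE !mxE.
Qed.

Definition IS := [set v : V | [forall d : dart E, tl d != v]].
Lemma nisoE : nisolated src dst = #|IS|. Proof. by []. Qed.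

Definition Jm : 'M['F_2]_(#|IS|, #|V|) := \matrix_(k, i) (enum_val i == (enum_val k : V))%:R.

Lemma JB0 : Jm *m Bm = 0.
Proof.
apply/row_matrixP => k; rewrite row_mul row0; apply/rowP => j.
rewrite mulBE /uv !mxE !enum_rankK.
have := enum_valP k; rewrite inE => /forallP iso.
have := iso (enum_val j, true); have := iso (enum_val j, false).
by rewrite /= => /negbTE -> /negbTE ->; rewrite addr0.
Qed.

Lemma kerPQ0 (x : 'rV['F_2]_#|FS|) : x *m Pm = 0 -> x *m Qm = 0 -> x = 0.
Proof.
move=> hP hQ; apply/rowP => f; rewrite mxE.
have := enum_valP f; case/imsetP => d0 _ e0.
have : d0 \in fv f by rewrite /fv e0 inE connect0.
rewrite in_fv => /eqP ->; rewrite -potE -(qv_tail _ hP).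
have := congr1 (fun M : 'rV['F_2]_#|V| => M 0 (enum_rank (tl d0))) hQ.
by rewrite mulQE enum_rankK mxE.
Qed.

Lemma rank_X : \rank (kermx Pm *m Qm) = \rank (kermx Pm).
Proof.
have <- := mxrank_mul_ker (kermx Pm) Qm.
suff -> : (kermx Pm :&: kermx Qm)%MS = 0 by rewrite mxrank0 addn0.
apply/eqP; rewrite -submx0; apply/row_subP => r.
have := row_sub r (kermx Pm :&: kermx Qm)%MS; rewrite sub_capmx => /andP[].
move=> /sub_kermxP h1 /sub_kermxP h2.
by rewrite (kerPQ0 h1 h2) sub0mx.
Qed.

Lemma XJ0 : (kermx Pm *m Qm :&: Jm)%MS = 0.
Proof.
apply/eqP; rewrite -submx0; apply/row_subP => r.
set y := row r _.
have := row_sub r (kermx Pm *m Qm :&: Jm)%MS; rewrite sub_capmx -/y => /andP[].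
move=> /submxP[u yu] /submxP[w yw].
suff -> : y = 0 by rewrite sub0mx.
apply/rowP => i; rewrite [RHS]mxE.
case iso: (enum_val i \in IS).
  rewrite yu mulmxA mxE big1 // => f _; rewrite /Qm [X in _ * X]mxE; case: pickP => [d /eqP td|]; last by rewrite mulr0.
  by move: iso; rewrite inE => /forallP/(_ d); rewrite td eqxx.
rewrite yw mxE big1 // => k _; rewrite /Jm mxE.
case: eqP => [e|]; last by rewrite mulr0.
by move: (enum_valP k); rewrite -e iso.
Qed.

Lemma rank_J : \rank Jm = #|IS|.
Proof.
have h : \rank (Jm *m Jm^T) = #|IS|.
  suff -> : Jm *m Jm^T = 1%:M by rewrite mxrank1.
  apply/matrixP => k k'; rewrite /Jm !mxE; under eq_bigr => j _ do rewrite !mxE.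
  rewrite (sum_ordT (fun v => (v == (enum_val k : V))%:R * (v == (enum_val k' : V))%:R)).
  rewrite sum_eq1 eq_sym; case: eqP => [/enum_val_inj -> | ne]; first by rewrite eqxx.
  by case: eqP => // ek; case: ne; rewrite ek.
apply/eqP; rewrite eqn_leq rank_leq_row /=.
by apply: leq_trans (mxrankM_maxl Jm Jm^T); rewrite h.
Qed.

Lemma kP_bound : (\rank (kermx Pm) + #|IS| <= \rank (kermx Bm))%N.
Proof.
rewrite -rank_X -rank_J -mxrank_disjoint_sum ?XJ0 //.
apply: mxrankS; rewrite addsmx_sub; apply/andP; split; apply/sub_kermxP; last exact: JB0.
apply/row_matrixP => r; rewrite row0 2!row_mul; apply: kerPQB.
by rewrite -row_mul mulmx_ker row0.
Qed.
End Step4.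

Theorem face_potential (V E : finType) (src dst : E -> V) (s : {perm dart E})
  (rotS : is_rotation src dst s) (g0 : genus0 src dst s) (g : E -> 'F_2) :
  (forall v, \sum_(d | tail src dst d == v) g d.1 = 0) ->
  exists a : dart E -> 'F_2, (forall d, a (s (flip d)) = a d) /\
     (forall e, g e = a (e, true) + a (e, false)).
Proof.
move=> hg.
set B := Bm src dst; set P := Pm s; set K := kermx B^T.
set Z : 'rV['F_2]_#|E| := \row_j g (enum_val j).
have ZK : (Z <= K)%MS.
  apply/sub_kermxP; apply/rowP => k; rewrite [RHS]mxE -[RHS](hg (enum_val k)) mxE.
  transitivity (\sum_(e : E) \sum_(b : bool) ((tail src dst (e, b) == enum_val k)%:R * g e) : 'F_2).
    rewrite -(sum_ordT (fun e => \sum_(b : bool) _)); apply: eq_bigr => j _.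
    rewrite !mxE big_bool /=; ring.
  rewrite pair_big /= [RHS]big_mkcond /=; apply: eq_bigr => -[e b] _ /=.
  by case: (_ == _); rewrite ?mul1r ?mul0r.
have PK : (P <= K)%MS by apply/sub_kermxP; exact: PB0.
have rK : \rank K = (#|E| - \rank B)%N by rewrite mxrank_ker mxrank_tr.
have rkB : \rank (kermx B) = (#|V| - \rank B)%N by rewrite mxrank_ker.
have rkP : \rank (kermx P) = (#|FS s| - \rank P)%N by rewrite mxrank_ker.
have b1 := kP_bound rotS; have b2 := rank_kerB src dst.
have b3 : (\rank B <= #|V|)%N := rank_leq_row B.
have b4 : (\rank B <= #|E|)%N := rank_leq_col B.
have b5 : (\rank P <= #|FS s|)%N := rank_leq_row P.
have e0 : (#|V| + (#|FS s| + #|IS src dst|) = #|E| + 2 * ncomp src dst)%N by exact: g0.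
have KP : (K <= P)%MS.
  have := mxrank_leqif_sup PK => -[_ <-].
  rewrite eqn_leq mxrankS //=.
  rewrite rK; move: rkB rkP b1 b2 b3 b4 b5 e0; rewrite /B /P.
  move: (\rank (kermx (Bm src dst))) (\rank (kermx (Pm s))) (\rank (Bm src dst)) (\rank (Pm s)).
  move=> kB kP rB rP; lia.
have [x Zx] := submxP (submx_trans ZK KP).
exists (pot x); split; first by move=> d; exact: pot_phi.
move=> e; have := congr1 (fun M : 'rV['F_2]_#|E| => M 0 (enum_rank e)) Zx.
by rewrite mulPE enum_rankK mxE enum_rankK.
Qed.

Section Chain.
Variables (V E : finType) (src dst : E -> V) (s : {perm dart E}).
Hypothesis rotS : is_rotation src dst s.
Local Notation tl := (tail src dst).
Variables (g : E -> 'F_2) (a : dart E -> 'F_2).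
Hypothesis ha1 : forall d, a (s (flip d)) = a d.
Hypothesis ha2 : forall e, g e = a (e, true) + a (e, false).

Lemma a_flip d : a (flip d) = a (s d).
Proof. by rewrite -[in RHS](flipK d) ha1. Qed.

Lemma g_dart d : g d.1 = a d + a (s d).
Proof. rewrite -a_flip ha2; case: d => e [] //=; by rewrite addrC. Qed.

Lemma a_s d : g d.1 = 0 -> a (s d) = a d.
Proof. by rewrite g_dart => /addxx_eq. Qed.

Lemma a_edge d : g d.1 = 0 -> a (flip d) = a d.
Proof. by move=> h; rewrite a_flip a_s. Qed.

Lemma tl_iter k d : tl (iter k s d) = tl d.
Proof. by elim: k => //= k IH; rewrite rotS.1. Qed.

Lemma vertex_const d d' : (forall d0, tl d0 = tl d -> g d0.1 = 0) -> tl d' = tl d -> a d' = a d.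
Proof.
move=> h /esym /(rotS.2) /iter_findex <-.
elim: (findex _ d d') => //= k IH; rewrite a_s // h //.
by rewrite tl_iter.
Qed.

Definition dhead (d : dart E) := tl (flip d).

Lemma chain p x : dhead p = tl x ->
  (forall d, tl d = tl x -> g d.1 != 0 -> d = flip p \/ d = x) -> a p = a x.
Proof.
move=> hpx hz.
set i := flip p.
have ti : tl (s i) = tl x by rewrite rotS.1.
have cx : fconnect s (s i) x by apply: rotS.2.
rewrite -(ha1 p) -/i.
set n := findex s (s i) x.
have nlt := findex_max cx.
suff H : forall k, (k <= n)%N -> a (iter k s (s i)) = a (s i).
  by rewrite -(H n (leqnn n)) /n iter_findex.
elim=> // k IH kn.
have kn' : (k < n)%N := kn.
rewrite iterS a_s ?IH 1?ltnW //.
apply/eqP; apply: contraT => nz.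
have := hz _ _ nz; rewrite tl_iter ti => /(_ erefl) [] e.
  have : iter k.+1 s (s i) = s i by rewrite iterS e.
  move=> /(congr1 (findex s (s i))); rewrite findex0 findex_iter //.
  exact: leq_ltn_trans kn nlt.
have : findex s (s i) (iter k s (s i)) = n by rewrite e.
rewrite findex_iter; last exact: ltn_trans kn' nlt.
by move=> ekn; rewrite ekn ltnn in kn'.
Qed.
End Chain.

Section CycleW.
Variables (V E : finType) (src dst : E -> V) (s : {perm dart E}).
Hypothesis rotS : is_rotation src dst s.
Local Notation tl := (tail src dst).
Local Notation dhead := (dhead src dst).
Variables (W : seq V) (d0 : dart E).
Hypothesis Wu : uniq W.
Hypothesis Wadj : forall u, u \in W -> exists d, (tl d == u) && (dhead d == next W u).

Definition mk u w := odflt d0 [pick d | (tl d == u) && (dhead d == w)].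
Definition M u := mk u (next W u).

Lemma M_spec u : u \in W -> tl (M u) = u /\ dhead (M u) = next W u.
Proof.
move=> uW; rewrite /M /mk; case: pickP => [d /andP[/eqP -> /eqP ->] //| none].
by have [d /andP[h1 h2]] := Wadj uW; have := none d; rewrite h1 h2.
Qed.

Definition cyc := map M W.
Definition gc (e : E) : 'F_2 := \sum_(x <- cyc) (e == x.1)%:R.

Lemma dart_sum (v : V) (e : E) :
  \sum_(d | tl d == v) ((d.1 == e)%:R : 'F_2) = (tl (e, true) == v)%:R + (tl (e, false) == v)%:R.
Proof.
rewrite big_mkcond /= (bigD1 (e, true)) //= (bigD1 (e, false)) //=.
have ee : (e == e) = true := eqxx e.
rewrite big1 ?addr0; last first.
  move=> [e' b] /andP[h1 h2]; case: ifP => // _.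
  case: eqP => [/= ee'|]; last by [].
  by subst e'; case: b h1 h2; rewrite ?eqxx.
case: ifP => _; case: ifP => _; rewrite ?ee /= ?addr0 ?add0r; try reflexivity.
all: by apply/negP => /eqP [].
Qed.

Lemma sum_next (F : V -> 'F_2) : \sum_(u <- W) F (next W u) = \sum_(u <- W) F u.
Proof.
rewrite -(big_map (next W) predT F); apply: perm_big.
apply: uniq_perm => //.
  rewrite map_inj_uniq //; exact: (can_inj (prev_next Wu)).
move=> x; apply/mapP/idP => [[y yW ->]|xW]; first by rewrite mem_next.
by exists (prev W x); rewrite ?mem_prev // next_prev.
Qed.

Lemma gc_cycle v : \sum_(d | tl d == v) gc d.1 = 0.
Proof.
rewrite /gc; under eq_bigr => d _ do rewrite big_map.
rewrite exchange_big /=.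
transitivity (\sum_(u <- W) (((u == v)%:R : 'F_2) + (next W u == v)%:R)).
  rewrite big_seq_cond [RHS]big_seq_cond; apply: eq_bigr => u /andP[uW _].
  rewrite dart_sum; have [h1 h2] := M_spec uW; rewrite /dhead in h2.
  by case: (M u) h1 h2 => e [] /= -> ->; rewrite // addrC.
by rewrite big_split /= (sum_next (fun u => (u == v)%:R)) addxx.
Qed.

Lemma gc_nz d : gc d.1 != 0 -> exists2 u, u \in W & (d = M u \/ d = flip (M u)).
Proof.
move=> nz; have : ~~ all (fun x => x.1 != d.1) cyc.
  apply: contra nz => /allP h; apply/eqP; rewrite /gc big1_seq // => x /andP[_ xc].
  by rewrite eq_sym (negbTE (h x xc)).
rewrite -has_predC => /hasP[x /mapP[u uW ->]] /= /negPn/eqP e.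
exists u => //; clear nz; case: d e => e' b /= <-; case: (M u) => e'' b' /=.
by case: b; case: b'; auto.
Qed.

Lemma uniq_tl u u' : u \in W -> u' \in W -> u = u' -> True. Proof. by []. Qed.

Lemma zdarts v d : v \in W -> tl d = v -> gc d.1 != 0 ->
  d = M v \/ d = flip (M (prev W v)).
Proof.
move=> vW td /gc_nz[u uW [e|e]].
  by left; have [h _] := M_spec uW; rewrite e -h -e td.
right; have [_ h] := M_spec uW.
have : next W u = v by rewrite -h -td e.
by move=> <-; rewrite prev_next.
Qed.

Lemma gc_tail d : gc d.1 != 0 -> tl d \in W.
Proof.
move=> /gc_nz[u uW [->|->]]; have [h1 h2] := M_spec uW.
  by rewrite h1.
by rewrite /dhead in h2; rewrite h2 mem_next.
Qed.

Variable a : dart E -> 'F_2.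
Hypothesis ha1 : forall d, a (s (flip d)) = a d.
Hypothesis ha2 : forall e, gc e = a (e, true) + a (e, false).

Lemma a_next u : u \in W -> a (M (next W u)) = a (M u).
Proof.
move=> uW; have nW : next W u \in W by rewrite mem_next.
have [h1 h2] := M_spec uW; have [h3 _] := M_spec nW.
symmetry; apply: (chain rotS ha1 ha2).
  by rewrite h2 h3.
move=> d; rewrite h3 => td nz.
by case: (zdarts nW td nz) => ->; [right | left; rewrite prev_next].
Qed.

Lemma a_const u u' : u \in W -> u' \in W -> a (M u') = a (M u).
Proof.
move=> uW u'W.
have : fconnect (next W) u u' by rewrite (fconnect_cycle (cycle_next Wu) uW).
move=> /iter_findex <-; elim: (findex _ u u') => //= k IH.
rewrite a_next ?IH //.
elim: k {IH} => //= k IH; by rewrite mem_next.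
Qed.
End CycleW.

Definition o0 : 'I_3 := @Ordinal 3 0 isT.
Definition o1 : 'I_3 := @Ordinal 3 1 isT.
Definition o2 : 'I_3 := @Ordinal 3 2 isT.
Lemma succ3_0 : succ3 o0 = o1. Proof. exact/val_inj. Qed.
Lemma succ3_1 : succ3 o1 = o2. Proof. exact/val_inj. Qed.
Lemma succ3_2 : succ3 o2 = o0. Proof. exact/val_inj. Qed.

Lemma bidx_inj s : injective (bidx s).
Proof. by case: s => i j /= /(congr1 val) /= => [/addnI|] /val_inj. Qed.

Lemma upath (T : finType) (e : rel T) x y : connect e x y ->
  exists q, [/\ path e x q, last x q = y & uniq (x :: q)].
Proof.
move=> /connectP[p pth ->]; case: (shortenP pth) => q pq uq _; by exists q.
Qed.

Lemma path_lift (T T' : eqType) (e : rel T) (e' : rel T') (f : T -> T') x q :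
  (forall u w, e u w -> e' (f u) (f w)) -> path e x q -> path e' (f x) (map f q).
Proof. move=> h; elim: q x => //= y q IH x /andP[exy pq]; by rewrite h // IH. Qed.

Lemma uniqW (T : eqType) (A B : seq T) : uniq A -> uniq B ->
  (forall x, x \in A -> x \in B -> False) ->
  uniq ((@inr T bool false) :: map inl A ++ inr true :: map inl B).
Proof.
move=> uA uB dis.
have inj : injective (@inl T bool) by move=> ? ? [].
rewrite /= mem_cat negb_or cat_uniq /= !map_inj_uniq // uA uB /= !andbT.
rewrite inE /=.
have nA c : (@inr T bool c \in map inl A) = false by apply/mapP => -[].
have nB c : (@inr T bool c \in map inl B) = false by apply/mapP => -[].
rewrite !nA !nB /= andbT; apply/hasPn => y /mapP[x xB ->].
rewrite /= mem_map //; apply/negP => xA; exact: (dis x).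
Qed.

Lemma cycW_gen (T T' : eqType) (e : rel (T + T')) hL hR x0 qA x1 qB :
  e hL (inl x0) -> path e (inl x0) (map inl qA) -> e (inl (last x0 qA)) hR ->
  e hR (inl x1) -> path e (inl x1) (map inl qB) -> e (inl (last x1 qB)) hL ->
  path.cycle e (hL :: map inl (x0 :: qA) ++ hR :: map inl (x1 :: qB)).
Proof.
move=> h1 h2 h3 h4 h5 h6.
rewrite /= rcons_cat cat_path /= h1 h2 /= (last_map inl) h3 h4 /= rcons_path h5 /=.
by rewrite (last_map inl).
Qed.

Lemma prev_head (T : eqType) (x : T) p : x \notin p -> prev (x :: p) x = last x p.
Proof.
move=> xp; rewrite prev_nth mem_head /= (memNindex xp).
by rewrite -[size p]/((size (x :: p)).-1) nth_last.
Qed.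

Lemma next_head (T : eqType) (x y : T) p : next (x :: y :: p) x = y.
Proof. by rewrite /next /= eqxx. Qed.

Section Obstruction.
Variables (V E : finType) (src dst : E -> V) (bnd : 'I_6 -> V) (Z : {set E}).
Hypothesis bnd_inj : injective bnd.
Variable rot : {perm dart (augE E)}.
Local Notation asrc := (aug_src src bnd).
Local Notation adst := (aug_dst dst bnd).
Local Notation tl := (tail asrc adst).
Local Notation dh := (dhead asrc adst).
Hypothesis rotS : is_rotation asrc adst rot.
Hypothesis g0 : genus0 asrc adst rot.
Hypothesis hub : forall s i, rot (spoke_dart E s i) = spoke_dart E s (succ3 i).
Local Notation G := (adj_without src dst Z).
Local Notation b s i := (bnd (bidx s i)).
Hypothesis h03 : connect G (b false o0) (b true o0).
Hypothesis h14 : connect G (b false o1) (b true o1).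
Hypothesis h25 : connect G (b false o2) (b true o2).
Hypothesis dAB : ~~ connect G (b false o0) (b false o1).
Hypothesis dAC : ~~ connect G (b false o0) (b false o2).
Hypothesis dBC : ~~ connect G (b false o2) (b false o1).

Local Notation sp := (spoke_dart E).
Lemma tl_sp s i : tl (sp s i) = inr s. Proof. by []. Qed.
Lemma dh_sp s i : dh (sp s i) = inl (b s i). Proof. by []. Qed.

Lemma sp_uniq d s i : tl d = inr s -> dh d = inl (b s i) -> d = sp s i.
Proof.
case: d => [[e|[[s' i'] []]] []] //=; rewrite /dhead /flip /tail /=; try by [].
by move=> [->] [/bnd_inj /bidx_inj ->].
Qed.

Lemma sp_uniq' d s i : tl d = inl (b s i) -> dh d = inr s -> d = flip (sp s i).
Proof.
move=> h1 h2; rewrite -(sp_uniq (d := flip d)) ?flipK //.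
by rewrite /dhead flipK.
Qed.

Lemma Gsym : connect_sym G. Proof. exact/sym_connect_sym/adj_sym. Qed.

Definition eA (u w : augV V) := [exists d, (tl d == u) && (dh d == w)].

Lemma eA_lift u w : G u w -> eA (inl u) (inl w).
Proof.
case/existsP => e /andP[_ /orP[] /andP[/eqP h1 /eqP h2]].
  by apply/existsP; exists (inl e, true); rewrite /dhead /tail /= h1 h2 !eqxx.
by apply/existsP; exists (inl e, false); rewrite /dhead /tail /= h1 h2 !eqxx.
Qed.

Lemma eA_sp s i : eA (inr s) (inl (b s i)).
Proof. by apply/existsP; exists (sp s i); rewrite tl_sp dh_sp !eqxx. Qed.
Lemma eA_sp' s i : eA (inl (b s i)) (inr s).
Proof. by apply/existsP; exists (flip (sp s i)); rewrite /dhead flipK /tail /= !eqxx. Qed.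

Theorem obstruction : False.
Proof.
have [qA [pA lA uA]] := upath h03.
have h41 : connect G (b true o1) (b false o1) by rewrite Gsym.
have [qB [pB lB uB]] := upath h41.
set VA := b false o0 :: qA; set VB := b true o1 :: qB.
have cA u : u \in VA -> connect G (b false o0) u by apply: path_connect.
have cB u : u \in VB -> connect G (b false o1) u.
  move=> uVB; apply: connect_trans (path_connect pB uVB); by rewrite Gsym.
set s1 := inr false :: map inl VA; set s2 := inr true :: map inl VB.
set W : seq (augV V) := s1 ++ s2.
have Wu : uniq W.
  rewrite /W /s1 /s2 cat_cons; apply: uniqW => // x xA xB; move: dAB.
  by rewrite (connect_trans (cA _ xA)) // Gsym; apply: cB.
have cycW : path.cycle eA W.
  rewrite /W /s1 /s2 cat_cons; apply: cycW_gen.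
  - exact: eA_sp.
  - exact: path_lift eA_lift pA.
  - rewrite lA; exact: eA_sp'.
  - exact: eA_sp.
  - exact: path_lift eA_lift pB.
  - rewrite lB; exact: eA_sp'.
have Wadj : forall u, u \in W -> exists d, (tl d == u) && (dh d == next W u).
  by move=> u uW; apply/existsP; exact: next_cycle cycW uW.
set d0 := sp false o0.
have gcyc := gc_cycle d0 Wu Wadj.
have [a [ha1 ha2]] := face_potential rotS g0 gcyc.
set g := gc asrc adst W d0 in ha2 gcyc.
have hLW : inr false \in W by rewrite /W mem_cat mem_head.
have hRW : inr true \in W by rewrite /W mem_cat /s2 mem_head orbT.
have nL : next W (inr false) = inl (b false o0) by rewrite /W /s1 /VA /= ?eqxx.
have rW : seq.rot (size s1) W = inr true :: (map inl VB ++ s1) by rewrite /W rot_size_cat.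
have ruW : uniq (seq.rot (size s1) W) by rewrite rot_uniq.
have nR : next W (inr true) = inl (b true o1).
  by rewrite -(next_rot (size s1) Wu) rW /s2 /VB /= ?eqxx.
have pR : prev W (inr true) = inl (b true o0).
  rewrite -(prev_rot (size s1) Wu) rW prev_head; last by move: ruW; rewrite rW => /andP[].
  by rewrite last_cat /s1 /VA /= (last_map inl) lA.
have a3W : inl (b true o0) \in W by rewrite -pR mem_prev.
have ML : M asrc adst W d0 (inr false) = sp false o0.
  have [t1 t2] := M_spec d0 Wadj hLW; rewrite nL in t2; exact: sp_uniq t1 t2.
have MR : M asrc adst W d0 (inr true) = sp true o1.
  have [t1 t2] := M_spec d0 Wadj hRW; rewrite nR in t2; exact: sp_uniq t1 t2.
have M3 : M asrc adst W d0 (inl (b true o0)) = flip (sp true o0).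
  have [t1 t2] := M_spec d0 Wadj a3W.
  have t3 : dh (M asrc adst W d0 (inl (b true o0))) = inr true by rewrite t2 -pR (next_prev Wu).
  exact: sp_uniq' t1 t3.
have g1 : g (sp true o0).1 = 1.
  rewrite /g /gc /cyc big_map (bigD1_seq _ a3W Wu) /= M3 /= big1_seq ?addr0 //.
  move=> u /andP[nu uW]; case: eqP => // e; exfalso.
  have [t1 _] := M_spec d0 Wadj uW.
  move: e t1; case EM: (M _ _ _ _ u) => [e' bb] /= ee; subst e'.
  case: bb EM => EM /= hu.
    rewrite -hu in EM; move: MR; rewrite EM => h.
    by have := congr1 (fun d : dart (augE E) => if d.1 is inr (_, i, _) then val i else 0%N) h.
  by move: nu; rewrite -hu eqxx.
have good u : connect G (b false o2) u -> forall d, tl d = inl u -> g d.1 = 0.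
  move=> cu d td; apply/eqP; apply: contraT => nz.
  have := gc_tail Wadj nz; rewrite td /W mem_cat /s1 /s2 !inE /= !mem_map; try by move=> ? ? [].
  case/orP => [uVA|uVB].
    move: dAC; rewrite (connect_trans (cA _ uVA)) //; by rewrite Gsym.
  move: dBC; rewrite (connect_trans cu) //; rewrite Gsym; exact: cB.
have dart_of x y : G x y -> exists dd, tl dd = inl x /\ dh dd = inl y.
  by move/eA_lift/existsP => [dd /andP[/eqP ? /eqP ?]]; exists dd.
set val := a (flip (sp false o2)).
have base d : tl d = inl (b false o2) -> a d = val.
  move=> td; apply: (vertex_const rotS ha1 ha2); last by rewrite td.
  move=> d1; rewrite /= => t1; apply: (good (b false o2)) => //.
have key : forall p x, connect G (b false o2) x -> path G x p ->
    (forall d, tl d = inl x -> a d = val) -> forall d, tl d = inl (last x p) -> a d = val.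
  elim=> [|y p IH] x cx //= /andP[gxy pp] hx.
  have cy := connect_trans cx (connect1 gxy).
  apply: (IH _ cy pp) => d td.
  have [dd [t1 t2]] := dart_of _ _ gxy.
  have e1 : a (flip dd) = a dd by apply: (a_edge ha1 ha2); apply: (good _ cx _ t1).
  rewrite -(hx dd t1) -e1; apply: (vertex_const rotS ha1 ha2).
    move=> d1 t3; apply: (good y cy); by rewrite t3.
  by rewrite td.
have [p25 [pth25 l25 _]] := upath h25.
have v5 : a (flip (sp true o2)) = val.
  by apply: (key _ _ (connect0 _ _) pth25 base); rewrite l25.
have e1 : a (flip (sp false o2)) = a (sp false o0) by rewrite (a_flip ha1) hub succ3_2.
have e2 : a (flip (sp true o2)) = a (sp true o0) by rewrite (a_flip ha1) hub succ3_2.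
have e4 : a (sp true o1) = a (sp false o0).
  by rewrite -ML -MR; apply: (a_const rotS Wu Wadj ha1 ha2).
have e5 := g_dart ha1 ha2 (sp true o0); rewrite g1 hub succ3_0 in e5.
move: e5; rewrite e4 -e2 v5 -e1 addxx => /eqP; by rewrite (negbTE one0).
Qed.

End Obstruction.

Section Cuts.
Variable R : realType.

Definition crossS (E : finType) (src dst : E -> 'I_6) (S : {set 'I_6}) :=
  [set e | (src e \in S) != (dst e \in S)].

Lemma mincut_all (E : finType) (src dst : E -> 'I_6) (S : {set 'I_6}) :
  is_mincut src dst (fun _ => 1 : R) S (~: S) (#|crossS src dst S|%:R).
Proof.
have side x p : path (adj_without src dst (crossS src dst S)) x p ->
    (last x p \in S) = (x \in S).
  elim: p x => //= y p IH x /andP[/existsP[e /andP[eF h]] pp].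
  rewrite IH //; move: eF; rewrite inE negbK => /eqP.
  by case/orP: h => /andP[/eqP -> /eqP ->].
split.
  exists (crossS src dst S); split; last by rewrite sumr_const.
  move=> x y xS yS; apply/negP => /connectP[p pth ey].
  by move: yS; rewrite inE ey side // xS.
move=> F sep; rewrite sumr_const ler_nat; apply: subset_leq_card.
apply/subsetP => e; rewrite inE => ce; apply: contraT => eF.
have adj : adj_without src dst F (src e) (dst e).
  by apply/existsP; exists e; rewrite eF !eqxx.
case sS: (src e \in S); rewrite sS in ce.
  have dS : dst e \in ~: S by rewrite inE.
  by move: (sep _ _ sS dS); rewrite (connect1 adj).
have dS : dst e \in S by move: ce; case: (dst e \in S).
have sS' : src e \in ~: S by rewrite inE sS.
by move: (sep _ _ dS sS'); rewrite (connect1 (_ : adj_without src dst F (dst e) (src e))) // adj_sym.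
Qed.

Definition cutv (E : finType) (src dst : E -> 'I_6) (Rg : region_set) : R :=
  #|crossS src dst (val Rg)|%:R.

Lemma model_all (E : finType) (src dst : E -> 'I_6) :
  graph_model (cutv src dst) src dst (fun _ => 1) (fun x => x).
Proof.
split; first by move=> _; exact: ler01.
split; first by move=> x y.
move=> Rg; rewrite !imset_id; exact: mincut_all.
Qed.

Section GM.
Variables (v : region_set -> R) (V E : finType) (src dst : E -> V) (w : E -> R) (bnd : 'I_6 -> V).
Hypothesis gm : graph_model v src dst w bnd.
Local Notation G := (adj_without src dst [set e | w e == 0]).

Lemma zero_sep (Rg : region_set) x y : v Rg = 0 -> x \in val Rg -> y \notin val Rg ->
  ~~ connect G (bnd x) (bnd y).
Proof.
move=> v0 xR yR; have [[F [sep sum0]] _] := gm.2.2 Rg.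
rewrite v0 in sum0.
have Fz e : e \in F -> w e = 0.
  move=> eF; exact: (psumr_eq0P (fun i _ => gm.1 i) sum0).
apply/negP => c.
have : connect (adj_without src dst F) (bnd x) (bnd y).
  apply: connect_sub c => a1 a2 /existsP[e /andP[ez h]]; apply: connect1.
  apply/existsP; exists e; rewrite h andbT; apply: contra ez => eF.
  by rewrite inE Fz.
by apply/negP; apply: sep; [apply: imset_f | apply: imset_f; rewrite inE].
Qed.

Lemma pos_conn i j : (forall Rg : region_set, i \in val Rg -> j \notin val Rg -> 0 < v Rg) ->
  connect G (bnd i) (bnd j).
Proof.
move=> H; apply: contraT => nc.
set S := [set k | connect G (bnd i) (bnd k)].
have iS : i \in S by rewrite inE connect0.
have Sne : S != set0 by apply/set0Pn; exists i.
pose Rg : region_set := exist _ S Sne.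
have := H Rg iS; rewrite inE nc => /(_ isT) pos.
have [_ lb] := gm.2.2 Rg.
have sep : separates src dst [set e | w e == 0] (bnd @: val Rg) (bnd @: ~: val Rg).
  move=> x y /imsetP[k1 k1S ->] /imsetP[k2 k2S ->]; apply/negP => c.
  move: k2S; rewrite inE /= inE; apply/negP; apply/negPn.
  move: k1S; rewrite /= inE => c1; exact: connect_trans c1 c.
have := lb _ sep; rewrite big1; last by move=> e; rewrite inE => /eqP.
by rewrite leNgt pos.
Qed.
End GM.
End Cuts.

Definition src1 (b : bool) : 'I_6 := if b then bidx false o1 else bidx false o0.
Definition dst1 (b : bool) : 'I_6 := if b then bidx true o1 else bidx true o0.
Definition src2 (u : unit) : 'I_6 := bidx false o2.
Definition dst2 (u : unit) : 'I_6 := bidx true o2.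

Section Mix.
Variable R : realType.
Definition v1 := cutv R src1 dst1.
Definition v2 := cutv R src2 dst2.
Definition vmix := fun Rg => 2^-1 * v1 Rg + (1 - 2^-1) * v2 Rg.

Lemma cut_pos (E : finType) (src dst : E -> 'I_6) (Rg : region_set) e :
  (src e \in val Rg) != (dst e \in val Rg) -> 0 < cutv R src dst Rg.
Proof.
move=> h; rewrite /cutv ltr0n card_gt0; apply/set0Pn; exists e; by rewrite inE.
Qed.

Lemma cut_ge0 (E : finType) (src dst : E -> 'I_6) (Rg : region_set) : 0 <= cutv R src dst Rg.
Proof. exact: ler0n. Qed.

Lemma mix_pos1 Rg : 0 < v1 Rg -> 0 < vmix Rg.
Proof.
move=> h; have h2 := cut_ge0 src2 dst2 Rg; rewrite /vmix -/(v2 Rg) in h2 *.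
have : 0 < 2^-1 * v1 Rg by apply: mulr_gt0; rewrite // invr_gt0 ltr0n.
have : 0 <= (1 - 2^-1) * v2 Rg.
  apply: mulr_ge0 => //; rewrite subr_ge0 invf_le1 ?ler1n ?ltr0n //.
lra.
Qed.

Lemma mix_pos2 Rg : 0 < v2 Rg -> 0 < vmix Rg.
Proof.
move=> h; have h2 := cut_ge0 src1 dst1 Rg; rewrite /vmix -/(v1 Rg) in h2 *.
have : 0 <= 2^-1 * v1 Rg by apply: mulr_ge0; rewrite // invr_ge0 ler0n.
have : 0 < (1 - 2^-1) * v2 Rg.
  apply: mulr_gt0 => //; rewrite subr_gt0 invf_lt1 ?ltr1n ?ltr0n //.
lra.
Qed.

Definition SA : {set 'I_6} := [set bidx false o0; bidx true o0].
Definition SC : {set 'I_6} := [set bidx false o2; bidx true o2].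
Lemma SA_ne : SA != set0. Proof. by apply/set0Pn; exists (bidx false o0); rewrite !inE eqxx. Qed.
Lemma SC_ne : SC != set0. Proof. by apply/set0Pn; exists (bidx false o2); rewrite !inE eqxx. Qed.
Definition RA : region_set := exist _ SA SA_ne.
Definition RC : region_set := exist _ SC SC_ne.

Lemma vmix_RA : vmix RA = 0.
Proof.
rewrite /vmix /v1 /v2 /cutv /crossS /=.
have -> : [set e | (src1 e \in SA) != (dst1 e \in SA)] = set0.
  by apply/setP => -[]; rewrite !inE.
have -> : [set e | (src2 e \in SA) != (dst2 e \in SA)] = set0.
  by apply/setP => -[]; rewrite !inE.
rewrite !cards0 !mulr0n; lra.
Qed.

Lemma vmix_RC : vmix RC = 0.
Proof.
rewrite /vmix /v1 /v2 /cutv /crossS /=.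
have -> : [set e | (src1 e \in SC) != (dst1 e \in SC)] = set0.
  by apply/setP => -[]; rewrite !inE.
have -> : [set e | (src2 e \in SC) != (dst2 e \in SC)] = set0.
  by apply/setP => -[]; rewrite !inE.
rewrite !cards0 !mulr0n; lra.
Qed.

Lemma not_mix : ~ in_planar_set vmix.
Proof.
move=> [_ [V [E [src [dst [w [bnd [gm [rot [rotS [g0 hub]]]]]]]]]]].
have binj := gm.2.1.
apply: (obstruction (Z := [set e | w e == 0]) binj rotS g0 hub).
- apply: (pos_conn gm) => Rg h1 h2; apply: mix_pos1; apply: (cut_pos (e := false)).
  by rewrite /= h1 (negbTE h2).
- apply: (pos_conn gm) => Rg h1 h2; apply: mix_pos1; apply: (cut_pos (e := true)).
  by rewrite /= h1 (negbTE h2).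
- apply: (pos_conn gm) => Rg h1 h2; apply: mix_pos2; apply: (cut_pos (e := tt)).
  by rewrite /= h1 (negbTE h2).
- by apply: (zero_sep gm (Rg := RA) vmix_RA); rewrite /= !inE.
- by apply: (zero_sep gm (Rg := RA) vmix_RA); rewrite /= !inE.
- by apply: (zero_sep gm (Rg := RC) vmix_RC); rewrite /= !inE.
Qed.
End Mix.

Definition Dl1 : seq (dart (augE bool)) := [:: (inl false, true); (inl false, false); (inl true, true); (inl true, false); (inr (false, o0, false), true); (inr (false, o0, false), false); (inr (false, o0, true), true); (inr (false, o0, true), false); (inr (false, o1, false), true); (inr (false, o1, false), false); (inr (false, o1, true), true); (inr (false, o1, true), false); (inr (false, o2, false), true); (inr (false, o2, false), false); (inr (false, o2, true), true); (inr (false, o2, true), false); (inr (true, o0, false), true); (inr (true, o0, false), false); (inr (true, o0, true), true); (inr (true, o0, true), false); (inr (true, o1, false), true); (inr (true, o1, false), false); (inr (true, o1, true), true); (inr (true, o1, true), false); (inr (true, o2, false), true); (inr (true, o2, false), false); (inr (true, o2, true), true); (inr (true, o2, true), false)].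
Definition Dl2 : seq (dart (augE unit)) := [:: (inl tt, true); (inl tt, false); (inr (false, o0, false), true); (inr (false, o0, false), false); (inr (false, o0, true), true); (inr (false, o0, true), false); (inr (false, o1, false), true); (inr (false, o1, false), false); (inr (false, o1, true), true); (inr (false, o1, true), false); (inr (false, o2, false), true); (inr (false, o2, false), false); (inr (false, o2, true), true); (inr (false, o2, true), false); (inr (true, o0, false), true); (inr (true, o0, false), false); (inr (true, o0, true), true); (inr (true, o0, true), false); (inr (true, o1, false), true); (inr (true, o1, false), false); (inr (true, o1, true), true); (inr (true, o1, true), false); (inr (true, o2, false), true); (inr (true, o2, false), false); (inr (true, o2, true), true); (inr (true, o2, true), false)].

Lemma mem_Dl1 d : d \in Dl1.
Proof.
case: d => [[e|[[s i] r]] b]; [case: e | case: s; case: r; case: i => [[|[|[|n]]] Hi]]; case: b => //.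
Qed.

Lemma mem_Dl2 d : d \in Dl2.
Proof.
case: d => [[e|[[s i] r]] b]; [case: e | case: s; case: r; case: i => [[|[|[|n]]] Hi]]; case: b => //.
Qed.

Lemma count_classes (T : finType) (e : rel T) (k : nat) (cls : T -> nat) (rep : nat -> T) :
  connect_sym e -> (forall x y, e x y -> cls x = cls y) ->
  (forall x, connect e (rep (cls x)) x) ->
  (forall i, (i < k)%N -> cls (rep i) = i) -> (forall x, (cls x < k)%N) ->
  #|[set [set y | connect e x y] | x : T]| = k.
Proof.
move=> sym inv cr H2 H1.
have cinv x y : connect e x y -> cls x = cls y.
  move=> /connectP[p pth ->] {y}; elim: p x pth => //= y p IH x /andP[exy pp].
  by rewrite (inv _ _ exy) IH.
have ceq x y : connect e x y -> [set z | connect e x z] = [set z | connect e y z].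
  move=> cxy; apply/setP => z; rewrite !inE; apply/idP/idP => h.
    by rewrite sym in cxy; exact: connect_trans cxy h.
  exact: connect_trans cxy h.
have -> : [set [set y | connect e x y] | x : T] =
          [set [set y | connect e (rep (val i)) y] | i : 'I_k].
  apply/setP => S; apply/imsetP/imsetP => [[x _ ->]|[i _ ->]].
    by exists (Ordinal (H1 x)) => //=; apply: ceq; rewrite sym; exact: cr.
  by exists (rep (val i)).
rewrite card_imset ?card_ord // => i j /= eq.
apply/val_inj; have : rep j \in [set y | connect e (rep i) y] by rewrite eq inE connect0.
by rewrite inE => /cinv; rewrite !H2.
Qed.

Lemma uniq_map_inj (T T' : eqType) (f : T -> T') s x y :
  uniq (map f s) -> x \in s -> y \in s -> f x = f y -> x = y.
Proof.
elim: s => //= z s IH /andP[nz us]; rewrite !inE.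
case/orP => [/eqP ->|xs]; case/orP => [/eqP ->|ys] //.
- by move=> e; move: nz; rewrite e map_f.
- by move=> e; move: nz; rewrite -e map_f.
- exact: IH.
Qed.

Definition idx3 (v : nat) : 'I_3 := if (v %% 3 == 0)%N then o0 else if (v %% 3 == 1)%N then o1 else o2.
Lemma bidx_side (x : 'I_6) : bidx (3 <= x)%N (idx3 x) = x.
Proof. by apply/val_inj; case: x => [[|[|[|[|[|[|n]]]]]] Hx]. Qed.

Section Concrete.
Variables (E : finType) (src dst : E -> 'I_6) (gd : 'I_6 -> option (dart (augE E))).
Local Notation asrc := (aug_src src (fun x : 'I_6 => x)).
Local Notation adst := (aug_dst dst (fun x : 'I_6 => x)).
Local Notation tl := (tail asrc adst).

Definition rotf (d : dart (augE E)) : dart (augE E) :=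
  match d with
  | (inl e, b) => let v := if b then src e else dst e in (inr ((3 <= v)%N, idx3 v, true), true)
  | (inr (s, i, false), true) => (inr (s, succ3 i, false), true)
  | (inr (s, i, true), true) => (inr (s, i, false), false)
  | (inr (s, i, false), false) => (inr (s, succ3 (succ3 i), true), false)
  | (inr (s, i, true), false) =>
      if gd (bidx s (succ3 i)) is Some d' then d' else (inr (s, succ3 i, true), true)
  end.

Variables (Dl reps : seq (dart (augE E))).
Hypothesis HDl : forall d, d \in Dl.
Hypothesis Hinj : uniq (map rotf Dl).
Hypothesis Htail : all (fun d => tl (rotf d) == tl d) Dl.
Hypothesis Hcyc : all (fun d1 => all (fun d2 => (tl d1 == tl d2) ==> (d2 \in traject rotf d1 4)) Dl) Dl.
Definition phif d := rotf (flip d).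
Definition clsf d := find (fun r => d \in traject phif r 30) reps.
Definition d00 : dart (augE E) := spoke_dart E false o0.
Hypothesis HF1 : all (fun d => clsf d < size reps)%N Dl.
Hypothesis HF2 : all (fun i => clsf (nth d00 reps i) == i) (iota 0 (size reps)).
Hypothesis HF3 : all (fun d => clsf (phif d) == clsf d) Dl.
Hypothesis Hconn : forall x, connect (adj_without asrc adst set0) (inr false) x.
Hypothesis Heuler : (8 + size reps = #|E| + 14)%N.

Lemma rotf_inj : injective rotf.
Proof. by move=> x y; apply: uniq_map_inj Hinj (HDl x) (HDl y). Qed.
Definition rotp : {perm dart (augE E)} := perm rotf_inj.
Lemma rotpE d : rotp d = rotf d. Proof. exact: permE. Qed.

Lemma traj_conn (T : finType) (f : T -> T) x y n : y \in traject f x n -> fconnect f x y.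
Proof. by case/trajectP => i _ ->; exact: fconnect_iter. Qed.

Lemma is_rot : is_rotation asrc adst rotp.
Proof.
split=> [d|d1 d2 e]; first by rewrite rotpE; exact/eqP/(allP Htail d (HDl d)).
rewrite (eq_connect (e' := frel rotf)); last by move=> x y; rewrite /= rotpE.
apply: (@traj_conn _ _ _ _ 4).
have := allP (allP Hcyc d1 (HDl d1)) d2 (HDl d2); by rewrite e eqxx.
Qed.

Lemma nfaces_eq : nfaces rotp = size reps.
Proof.
rewrite /nfaces; apply: (count_classes (cls := clsf) (rep := fun i => nth d00 reps i)).
- move=> x y; apply: fconnect_sym => u w /perm_inj; exact: (can_inj (@flipK _)).
- move=> x y /eqP <-; rewrite rotpE; symmetry; exact/eqP/(allP HF3 x (HDl x)).
- move=> x; rewrite (eq_connect (e' := frel phif)); last by move=> u w; rewrite /= rotpE.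
  apply: (@traj_conn _ _ _ _ 30).
  have h : has (fun r => x \in traject phif r 30) reps by rewrite has_find; exact: (allP HF1 x (HDl x)).
  exact: (nth_find d00 h).
- move=> i ilt; apply/eqP; apply: (allP HF2); by rewrite mem_iota.
- move=> x; exact: (allP HF1 x (HDl x)).
Qed.

Lemma niso0 : nisolated asrc adst = 0%N.
Proof.
apply/eqP; rewrite cards_eq0; apply/eqP/setP => v; rewrite !inE.
apply/negbTE; apply/negP => /forallP h.
case: v h => [x|s] h.
  have := h (inr ((3 <= x)%N, idx3 x, true), true).
  by rewrite /tail /= bidx_side eqxx.
by have := h (spoke_dart E s o0); rewrite /tail /= eqxx.
Qed.

Lemma ncomp1 : ncomp asrc adst = 1%N.
Proof.
rewrite /ncomp; apply: (count_classes (cls := fun _ => 0%N) (rep := fun _ => inr false)).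
- exact/sym_connect_sym/adj_sym.
- by [].
- exact: Hconn.
- by case.
- by [].
Qed.

Lemma planar_conc : planar_annulus src dst (fun x => x).
Proof.
exists rotp; split; first exact: is_rot.
split; last by move=> s i; rewrite rotpE.
rewrite /genus0 nfaces_eq niso0 ncomp1 !card_sum !card_prod !card_bool !card_ord.
move: Heuler; lia.
Qed.
End Concrete.

Section ConnGen.
Variables (E : finType) (src dst : E -> 'I_6).
Local Notation asrc := (aug_src src (fun x : 'I_6 => x)).
Local Notation adst := (aug_dst dst (fun x : 'I_6 => x)).
Local Notation adj := (adj_without asrc adst set0).

Lemma adj_sp s i : adj (inr s) (inl (bidx s i)).
Proof. by apply/existsP; exists (inr (s, i, false)); rewrite inE /= !eqxx. Qed.

Lemma conn_gen (e0 : E) i0 j0 : src e0 = bidx false i0 -> dst e0 = bidx true j0 ->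
  forall x, connect adj (inr false) x.
Proof.
move=> h1 h2.
have a0 : adj (inl (bidx false i0)) (inl (bidx true j0)).
  by apply/existsP; exists (inl e0); rewrite inE /= h1 h2 !eqxx.
have cR : connect adj (inr false) (inr true).
  apply: connect_trans (connect1 (adj_sp false i0)) _.
  apply: connect_trans (connect1 a0) _.
  by apply: connect1; rewrite adj_sym adj_sp.
case=> [v|[]]; last 2 first.
- exact: cR.
- exact: connect0.
rewrite -(bidx_side v); case: (3 <= v)%N.
  exact: connect_trans cR (connect1 (adj_sp true _)).
exact: connect1 (adj_sp false _).
Qed.
End ConnGen.

Definition gd1 (v : 'I_6) : option (dart (augE bool)) :=
  if v == bidx false o0 then Some (inl false, true)
  else if v == bidx true o0 then Some (inl false, false)
  else if v == bidx false o1 then Some (inl true, true)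
  else if v == bidx true o1 then Some (inl true, false)
  else None.
Definition gd2 (v : 'I_6) : option (dart (augE unit)) :=
  if v == bidx false o2 then Some (inl tt, true)
  else if v == bidx true o2 then Some (inl tt, false)
  else None.

Definition reps1 : seq (dart (augE bool)) :=
  [:: (inl false, true); (inl false, false); (inr (false, o0, false), true);
      (inr (false, o0, false), false); (inr (false, o1, false), false);
      (inr (true, o0, false), true); (inr (true, o0, false), false); (inr (true, o1, false), false)].
Definition reps2 : seq (dart (augE unit)) :=
  [:: (inl tt, true); (inr (false, o0, false), true);
      (inr (false, o0, false), false); (inr (false, o1, false), false);
      (inr (true, o0, false), true); (inr (true, o0, false), false); (inr (true, o1, false), false)].

Lemma planar1 : planar_annulus src1 dst1 (fun x => x).
Proof.
apply: (planar_conc (gd := gd1) (Dl := Dl1) (reps := reps1)).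
- exact: mem_Dl1.
- by vm_compute.
- by vm_compute.
- by vm_compute.
- by vm_compute.
- by vm_compute.
- by vm_compute.
- exact: (conn_gen (e0 := false) (i0 := o0) (j0 := o0)).
- by rewrite card_bool.
Qed.

Lemma planar2 : planar_annulus src2 dst2 (fun x => x).
Proof.
apply: (planar_conc (gd := gd2) (Dl := Dl2) (reps := reps2)).
- exact: mem_Dl2.
- by vm_compute.
- by vm_compute.
- by vm_compute.
- by vm_compute.
- by vm_compute.
- by vm_compute.
- exact: (conn_gen (e0 := tt) (i0 := o2) (j0 := o2)).
- by rewrite card_unit.
Qed.

Lemma in_v1 (R : realType) : in_planar_set (v1 R).
Proof.
split; first by move=> Rg; exact: cut_ge0.
exists _, _, src1, dst1, (fun _ => 1), (fun x => x).
split; [exact: model_all | exact: planar1].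
Qed.

Lemma in_v2 (R : realType) : in_planar_set (v2 R).
Proof.
split; first by move=> Rg; exact: cut_ge0.
exists _, _, src2, dst2, (fun _ => 1), (fun x => x).
split; [exact: model_all | exact: planar2].
Qed.

Theorem theorem3 (R : realType) :
  ~ (forall (v1 v2 : region_set -> R) (t : R),
       in_planar_set v1 -> in_planar_set v2 -> 0 <= t -> t <= 1 ->
       in_planar_set (fun Rg => t * v1 Rg + (1 - t) * v2 Rg)).
Proof.
move=> H; apply: (@not_mix R).
apply: (H _ _ _ (in_v1 R) (in_v2 R)).
  by rewrite invr_ge0 ler0n.
by rewrite invf_le1 ?ler1n ?ltr0n.
Qed.
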